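(* Under the hypotheses of Lemma 1 (real random variable $\hat g_i$ with mean $g_i\ne0$, variance $\sigma_i^2>0$, unimodal and symmetric distribution about $g_i$), one has $$\mathrm{Prob}(\mathrm{sign}\,\hat g_i=\mathrm{sign}\,g_i)\ge1-\frac12\cdot\frac{1}{1+z+z^2},\qquad z:=\frac{|g_i|}{\sqrt3\sigma_i}.$$
   Context: $\mathrm{sign}\,t=1,0,-1$ for $t>0,t=0,t<0$. *)

(* Defs.v *)
From HB Require Import structures.
From mathcomp Require Import all_boot all_order all_algebra.
From mathcomp Require Import all_classical all_reals all_analysis.
Set Implicit Arguments. Unset Strict Implicit. Unset Printing Implicit Defensive.
Import Order.TTheory GRing.Theory Num.Theory.
Local Open Scope classical_set_scope.
Local Open Scope ring_scope.

Definition convex_on (R : realType) (I : set R) (f : R -> R) : Prop :=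
  forall x y t : R, I x -> I y -> 0 <= t -> t <= 1 ->
    f (t * x + (1 - t) * y) <= t * f x + (1 - t) * f y.

Definition concave_on (R : realType) (I : set R) (f : R -> R) : Prop :=
  convex_on I (fun x => - f x).

(* Unimodal distribution (Khintchine): there is a mode m such that the
   cumulative distribution function is convex on (-oo, m) and concave
   on (m, +oo). *)
Definition unimodal_RV d (T : measurableType d) (R : realType)
  (P : probability T R) (X : {RV P >-> R}) : Prop :=
  exists m : R,
    convex_on [set x | x < m] (fun x => fine (cdf X x)) /\
    concave_on [set x | m < x] (fun x => fine (cdf X x)).

Definition symmetric_RV_about d (T : measurableType d) (R : realType)
  (P : probability T R) (X : T -> R) (c : R) : Prop :=
  forall A : set R, measurable A ->
    P (X @^-1` A) = P ((fun w => 2 * c - X w) @^-1` A).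

(* Main.v *)
Require Import Defs.
From HB Require Import structures.
From mathcomp Require Import all_boot all_order all_algebra.
From mathcomp Require Import all_classical all_reals all_analysis.
From mathcomp Require Import measurable_realfun.
From mathcomp Require Import ring lra.
Import Order.TTheory GRing.Theory Num.Theory.
Import numFieldNormedType.Exports.
Local Open Scope classical_set_scope.
Local Open Scope ring_scope.

Section Core.
Context {R : realType}.
Implicit Types D G : R -> R.

Lemma three_chord D u k v : convex_on [set t | 0 < t] D ->
  0 < u -> u < k -> k < v ->
  D k * (v - u) <= (v - k) * D u + (k - u) * D v.
Proof.
move=> cD u0 uk kv.
have vu : 0 < v - u by lra.
have := cD u v ((v - k) / (v - u)) u0 ltac:(rewrite /=; lra).
have -> : (v - k) / (v - u) * u + (1 - (v - k) / (v - u)) * v = k.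
  by field; lra.
move=> /(_ _ _) H.
have t0 : 0 <= (v - k) / (v - u) by apply: divr_ge0; lra.
have t1 : (v - k) / (v - u) <= 1 by rewrite ler_pdivrMr //; lra.
have {}H := H t0 t1.
have E1 : (1 - (v - k) / (v - u)) = (k - u) / (v - u) by field; lra.
rewrite E1 in H.
rewrite -(ler_pM2r vu) in H.
suff -> : (v - k) * D u + (k - u) * D v = ((v - k) / (v - u) * D u + (k - u) / (v - u) * D v) * (v - u) by [].
by field; lra.
Qed.

End Core.
Arguments three_chord {R D u k v}.


Section Core2.
Context {R : realType}.
Implicit Types D G : R -> R.

Lemma Dk_ge D k p : convex_on [set t | 0 < t] D -> 0 < k ->
  (forall t, 0 < t -> 0 <= D t) -> (forall t, 0 < t -> D t <= 1) ->
  (forall t, 0 < t -> t < k -> p <= D t) -> p <= D k.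
Proof.
move=> cD k0 D0 D1 Dp.
rewrite leNgt; apply/negP => Hk.
set e := p - D k.
have e0 : 0 < e by rewrite /e; lra.
have pD1 : p <= 1 by apply: (le_trans (Dp (k/2) _ _) (D1 _ _)); lra.
set l := e / 2.
have l0 : 0 <= l by rewrite /l; lra.
have l1 : l <= 1 by rewrite /l /e; have := D0 k k0; lra.
have H := cD (k/2) k l ltac:(rewrite /=; lra) k0 l0 l1.
have t2a : 0 < l * (k / 2) + (1 - l) * k by nra.
have t2b : l * (k / 2) + (1 - l) * k < k by rewrite /l; nra.
have := Dp _ t2a t2b.
have h1 : l * D (k/2) <= l by rewrite -[X in _ <= X]mulr1 ler_wpM2l // D1 //; lra.
have := D0 k k0.
rewrite /l /e in H h1 * => *; nra.
Qed.

Lemma tangent D k : convex_on [set t | 0 < t] D -> 0 < k ->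
  exists s, forall t, 0 < t -> D k + s * (t - k) <= D t.
Proof.
move=> cD k0.
pose S := [set sl | exists u, 0 < u /\ u < k /\ sl = (D k - D u) / (k - u)].
have ub v : k < v -> ubound S ((D v - D k) / (v - k)).
  move=> kv _ [u [u0 [uk ->]]].
  have := three_chord cD u0 uk kv.
  rewrite ler_pdivrMr ?subr_gt0 // mulrAC ler_pdivlMr ?subr_gt0 //.
  move=> H; nra.
have Sne : S !=set0 by exists ((D k - D (k/2)) / (k - k/2)); exists (k/2); split; lra.
have hs : has_sup S by split => //; exists ((D (2*k) - D k) / (2*k - k)); apply: ub; lra.
exists (sup S) => t t0.
have [tk|kt|<-] := ltgtP t k; last by lra.
- have : S ((D k - D t) / (k - t)) by exists t.
  move=> /(sup_upper_bound hs) H.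
  rewrite ler_pdivrMr ?subr_gt0 // in H; nra.
- have H := ge_sup Sne (ub t kt).
  rewrite ler_pdivlMr ?subr_gt0 // in H; nra.
Qed.

End Core2.
Arguments Dk_ge {R D k p}.
Arguments tangent {R D k}.


Section Core3.
Context {R : realType}.
Implicit Types D G : R -> R.

Lemma alg_final (a c z : R) : 0 < a -> a <= 1 -> 0 <= c -> c <= a -> 0 <= z ->
  a ^+ 3 * z ^+ 2 <= c ^+ 2 -> (a - c) * (1 + z + z ^+ 2) <= 1.
Proof.
move=> a0 a1 c0 ca z0 H.
set u := c / a.
have cE : c = u * a by rewrite /u divfK // gt_eqF.
have u0 : 0 <= u by apply: divr_ge0 => //; lra.
have u1 : u <= 1 by rewrite /u ler_pdivrMr //; lra.
rewrite cE in H *.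
have h2 : a * z ^+ 2 <= u ^+ 2.
  have : a ^+ 2 * (a * z ^+ 2) <= a ^+ 2 * u ^+ 2 by move: H; rewrite !exprS !expr0; nra.
  by rewrite ler_pM2l // exprn_gt0.
have h1 : a * z <= u.
  have : (a * z) ^+ 2 <= u ^+ 2.
    have : a * (a * z ^+ 2) <= a * u ^+ 2 by rewrite ler_pM2l.
    move: h2; rewrite !exprS !expr0; nra.
  by rewrite ler_sqr // nnegrE; nra.
have e : (a - u * a) * (1 + z + z ^+ 2) = (1 - u) * (a + a * z + a * z ^+ 2) by ring.
rewrite e.
have : a + a * z + a * z ^+ 2 <= 1 + u + u ^+ 2 by lra.
move=> h3.
have : (1 - u) * (a + a * z + a * z ^+ 2) <= (1 - u) * (1 + u + u ^+ 2).
  by apply: ler_wpM2l; lra.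
have : (1 - u) * (1 + u + u ^+ 2) <= 1.
  have -> : (1 - u) * (1 + u + u ^+ 2) = 1 - u ^+ 3 by ring.
  have : 0 <= u ^+ 3 by apply: exprn_ge0.
  lra.
lra.
Qed.

End Core3.
Arguments alg_final {R a c z}.


Section Core4.
Context {R : realType}.
Implicit Types D G : R -> R.

Lemma core D G (k p sigma : R) :
  0 < k -> 0 <= p -> 0 < sigma ->
  convex_on [set t | 0 < t] D ->
  (forall t, 0 < t -> 0 <= D t) -> (forall t, 0 < t -> D t <= 1) ->
  (forall t, 0 < t -> t < k -> p <= D t) ->
  (forall t t', 0 <= t -> t < t' -> D t' <= G t) ->
  (forall a b, 0 < a -> 0 < b -> (forall t, 0 <= t -> a - b * t <= G t) ->
     a ^+ 3 / (3 * b ^+ 2) <= sigma ^+ 2) ->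
  p * (1 + k / (Num.sqrt 3 * sigma) + (k / (Num.sqrt 3 * sigma)) ^+ 2) <= 1.
Proof.
move=> k0 p0 s0 cD D0 D1 Dp DG Mb.
set z := k / (Num.sqrt 3 * sigma).
have sq3 : 0 < Num.sqrt 3 :> R by rewrite sqrtr_gt0.
have z0 : 0 <= z by rewrite /z; apply: divr_ge0; [lra|]; apply: mulr_ge0; lra.
have z2 : z ^+ 2 = k ^+ 2 / (3 * sigma ^+ 2).
  rewrite /z expr_div_n exprMn sqr_sqrtr //; lra.
have pDk := Dk_ge cD k0 D0 D1 Dp.
have [s Hs] := tangent cD k0.
have pD1 : p <= 1 by apply: (le_trans (Dp (k/2) _ _) (D1 _ _)); lra.
have [sneg|spos] := ltP s 0.
-
  set b := - s; set a := D k + b * k.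
  have b0 : 0 < b by rewrite /b; lra.
  have Hl t : 0 < t -> a - b * t <= D t.
    by move=> /Hs; rewrite /a /b; lra.
  have Ga t : 0 <= t -> a - b * t <= G t.
    move=> t0; rewrite leNgt; apply/negP => Gt.
    set t' := t + (a - b * t - G t) / (2 * b).
    have tt' : t < t'.
      rewrite /t' ltrDl; apply: divr_gt0; lra.
    have := DG t t' t0 tt'.
    have := Hl t' ltac:(lra).
    have : b * t' = b * t + (a - b * t - G t) / 2.
      by rewrite /t'; field; lra.
    lra.
  have a1 : a <= 1.
    rewrite leNgt; apply/negP => a1.
    have := Hl ((a - 1) / (2 * b)) ltac:(apply: divr_gt0; lra).
    have := D1 ((a - 1) / (2 * b)) ltac:(apply: divr_gt0; lra).
    have : b * ((a - 1) / (2 * b)) = (a - 1) / 2 by field; lra.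
    lra.
  have a0 : 0 < a by rewrite /a; have := D0 k k0; have := mulr_gt0 b0 k0; lra.
  have M := Mb a b a0 b0 Ga.
  have key : a ^+ 3 * z ^+ 2 <= (b * k) ^+ 2.
    rewrite z2.
    rewrite ler_pdivrMr in M; last by apply: mulr_gt0; [lra|apply: exprn_gt0].
    have h3 : 0 < 3 * sigma ^+ 2 by apply: mulr_gt0; [lra|apply: exprn_gt0].
    rewrite mulrA ler_pdivrMr // exprMn.
    have hk : 0 <= k ^+ 2 by apply: sqr_ge0.
    have : a ^+ 3 * k ^+ 2 <= sigma ^+ 2 * (3 * b ^+ 2) * k ^+ 2 by apply: ler_wpM2r.
    move=> h; apply: (le_trans h); rewrite le_eqVlt; apply/orP; left; apply/eqP; ring.
  have ca : b * k <= a by rewrite /a; have := D0 k k0; lra.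
  have := alg_final a0 a1 (mulr_ge0 (ltW b0) (ltW k0)) ca z0 key.
  have -> : a - b * k = D k by rewrite /a; ring.
  move=> H; apply: le_trans H.
  apply: ler_wpM2r => //.
  have : 0 <= z ^+ 2 by apply: sqr_ge0.
  lra.
- (* degenerate case: p = 0 *)
  have Gp t : 0 <= t -> p <= G t.
    move=> t0; have [tk|kt] := ltP t k.
    + apply: (le_trans (Dp ((t + k) / 2) _ _)); [lra|lra|].
      apply: DG; lra.
    + apply: (le_trans pDk); apply: (le_trans _ (DG t (t + 1) t0 _)); last by lra.
      have := Hs (t + 1) ltac:(lra).
      have : 0 <= s * (t + 1 - k) by apply: mulr_ge0; lra.
      lra.
  have [->|pp] := eqVneq p 0; first by rewrite mul0r; lra.
  have p0' : 0 < p by rewrite lt_neqAle eq_sym pp.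
  set b := p * p / (2 * sigma).
  have b0 : 0 < b by rewrite /b; apply: divr_gt0; nra.
  have Gb t : 0 <= t -> p - b * t <= G t.
    by move=> t0; have := Gp t t0; have := mulr_ge0 (ltW b0) t0; lra.
  have := Mb p b p0' b0 Gb.
  have -> : p ^+ 3 / (3 * b ^+ 2) = 4 * sigma ^+ 2 / (3 * p).
    by rewrite /b; field; apply/andP; split; lra.
  rewrite ler_pdivrMr; last lra.
  have : 0 < sigma ^+ 2 by apply: exprn_gt0.
  move=> h1 h2; exfalso.
  have : sigma ^+ 2 * (3 * p) <= sigma ^+ 2 * 3 by rewrite ler_pM2l //; lra.
  lra.
Qed.

End Core4.


Section Int.
Context {R : realType}.

Lemma int_sqrt_line (a b : R) : 0 < a -> 0 < b ->
  (\int[@lebesgue_measure R]_(r in `[0%R, ((a / b) ^+ 2)%R]) ((a - b * Num.sqrt r)%R)%:E =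
   (a ^+ 3 / (3 * b ^+ 2))%R%:E)%E.
Proof.
move=> a0 b0.
set c := (a / b) ^+ 2.
have c0 : 0 < c by rewrite /c exprn_gt0 // divr_gt0.
pose F := fun r : R => a * r - (2 * b / 3) * (r * Num.sqrt r).
have cF : forall x : R, {for x, continuous F}.
  move=> x; apply: continuousB; first exact: continuousZr.
  apply: continuousZr; apply: continuousM; first exact: cvg_id.
  exact: sqrt_continuous.
have dF (r : R) : 0 < r -> is_derive r 1 F (a - b * Num.sqrt r).
  move=> r0.
  have s0 : 0 < Num.sqrt r by rewrite sqrtr_gt0.
  have h1 := is_derive1_sqrt r0.
  have h2 := is_deriveB (is_deriveZ a (is_derive_id r 1))
     (is_deriveZ (2 * b / 3) (is_deriveM (is_derive_id r 1) h1)).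
  have -> : F = (a *: id - (2 * b / 3) *: (id * Num.sqrt))%R.
    by apply/funext => x; rewrite /F /=.
  apply: (is_derive_eq h2).
  change (a * 1 - (2 * b / 3) * (r * (2 * Num.sqrt r)^-1 + Num.sqrt r * 1) = a - b * Num.sqrt r).
  have er : r = Num.sqrt r ^+ 2 by rewrite sqr_sqrtr // ltW.
  rewrite {1}er; field.
  by rewrite gt_eqF.
  have cf : forall x : R, {for x, continuous (fun r : R => a - b * Num.sqrt r)}.
    move=> x; apply: continuousB; first exact: cvg_cst.
    by apply: continuousZr; exact: sqrt_continuous.
  rewrite (@continuous_FTC2 R (fun r => a - b * Num.sqrt r) F 0 c c0).
  - rewrite /F !mul0r !mulr0 subr0 sube0; congr (_%:E).
    rewrite /c sqrtr_sqr ger0_norm; last by apply: divr_ge0; lra.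
    by field; rewrite gt_eqF.
  - exact: continuous_subspaceT.
  - split.
    + by move=> x; rewrite in_itv /= => /andP[x0 _]; exact: (ex_derive (is_derive:=dF x x0)).
    + exact: cvg_at_right_filter (cF 0).
    + exact: cvg_at_left_filter (cF c).
  - move=> x; rewrite in_itv /= => /andP[x0 _].
    by rewrite derive1E; exact: (derive_val (is_derive:=dF x x0)).
Qed.
End Int.


Section Mom.
Context {d} {T : measurableType d} {R : realType} {P : probability T R}.

Lemma var_eq (X : {RV P >-> R}) (g : R) : ('E_P[X] = g%:E)%E ->
  ('V_P[X] = 'E_P[(fun w => (X w - g) ^+ 2)%R])%E.
Proof.
move=> EX; rewrite /variance unlock EX /=.
congr (expectation P _); apply/funext => w /=.
Qed.

Lemma moment (X : {RV P >-> R}) (g sigma a b : R) :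
  ('E_P[X] = g%:E)%E -> ('V_P[X] = (sigma ^+ 2)%:E)%E -> 0 < a -> 0 < b ->
  (forall t, 0 <= t -> a - b * t <= fine (P [set w | t < `|X w - g|])) ->
  a ^+ 3 / (3 * b ^+ 2) <= sigma ^+ 2.
Proof.
move=> EX VX a0 b0 HG.
pose Y : {RV P >-> R} := ((X - cst g) * (X - cst g))%R.
have YE w : Y w = (X w - g) ^+ 2 by rewrite /Y /= expr2.
have Y0 w : 0 <= Y w by rewrite YE sqr_ge0.
have VY : ('V_P[X] = 'E_P[Y])%E.
  by rewrite (var_eq X g EX); congr (expectation P _); apply/funext => w.
rewrite ge0_expectation_ccdf // VX in VY.
rewrite -lee_fin VY -int_sqrt_line //.
set c := ((a / b) ^+ 2)%R.
have c0 : 0 <= c by rewrite /c sqr_ge0.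
apply: (@le_trans _ _ (\int[@lebesgue_measure R]_(r in `[0%R, c]) ccdf Y r)%E).
  apply: ge0_le_integral => //.
  - move=> r; rewrite /= in_itv /= => /andP[r0 rc].
    rewrite lee_fin subr_ge0.
    have : Num.sqrt r <= Num.sqrt c by rewrite ler_sqrt.
    rewrite /c sqrtr_sqr ger0_norm; last by rewrite divr_ge0 // ltW.
    move=> hs.
    have : b * Num.sqrt r <= b * (a / b) by rewrite ler_pM2l.
    have -> : b * (a / b) = a by field; rewrite gt_eqF.
    by [].
  - apply/measurable_EFinP; apply: measurable_funTS.
    have cf : forall x : R, {for x, continuous (fun r : R => a - b * Num.sqrt r)}.
      move=> x; apply: continuousB; first exact: cvg_cst.
      by apply: continuousZr; exact: sqrt_continuous.
    exact: continuous_measurable_fun cf.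
  - exact: measurable_funTS (ccdf_measurable Y).
  - move=> r; rewrite /= in_itv /= => /andP[r0 rc].
    have mS : d.-measurable (Y @^-1` `]r, +oo[) by exact: measurable_funPTI.
    have SE : [set w | Num.sqrt r < `|X w - g|] = Y @^-1` `]r, +oo[.
      apply/seteqP; split => w /=.
      + change (Num.sqrt r < `|X w - g| -> Y w \in `]r, +oo[).
        rewrite YE in_itv /= andbT.
        move=> h; have s0 : 0 <= Num.sqrt r by apply: sqrtr_ge0.
        have : Num.sqrt r ^+ 2 < `|X w - g| ^+ 2 by nra.
        by rewrite sqr_sqrtr // real_normK // num_real.
      + change (Y w \in `]r, +oo[ -> Num.sqrt r < `|X w - g|).
        rewrite YE in_itv /= andbT.
        move=> h; rewrite ltNge; apply/negP => h2.
        have s0 : 0 <= `|X w - g| by [].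
        have : `|X w - g| ^+ 2 <= Num.sqrt r ^+ 2 by nra.
        rewrite sqr_sqrtr // real_normK ?num_real //; lra.
    have := HG (Num.sqrt r) (sqrtr_ge0 r).
    rewrite SE -lee_fin fineK //; last exact: fin_num_measure.
apply: ge0_subset_integral => //.
- exact: measurable_funTS (ccdf_measurable Y).
- by move=> r /=; rewrite !in_itv /= => /andP[-> _].
Qed.
End Mom.


Definition pr d (T : measurableType d) (R : realType) (P : probability T R)
  (S : set T) : R := fine (P S).
Arguments pr {d T R} P S.

Section Pr.
Context {d} {T : measurableType d} {R : realType} {P : probability T R}.
Notation pr := (pr P).

Lemma prE S : measurable S -> P S = (pr S)%:E.
Proof. by move=> mS; rewrite /pr fineK // fin_num_measure. Qed.

Lemma pr_ge0 S : 0 <= pr S.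
Proof. by rewrite /pr fine_ge0 // measure_ge0. Qed.

Lemma pr_le1 S : measurable S -> pr S <= 1.
Proof. by move=> mS; rewrite -lee_fin -prE //; exact: probability_le1. Qed.

Lemma pr_le S1 S2 : measurable S1 -> measurable S2 -> S1 `<=` S2 -> pr S1 <= pr S2.
Proof. by move=> m1 m2 s12; rewrite -lee_fin -!prE //; apply: le_measure; rewrite ?inE. Qed.

Lemma pr_U S1 S2 : measurable S1 -> measurable S2 -> S1 `&` S2 = set0 ->
  pr (S1 `|` S2) = pr S1 + pr S2.
Proof.
move=> m1 m2 d12; apply: EFin_inj; rewrite EFinD -!prE //; last exact: measurableU.
exact: measureU.
Qed.

Lemma pr_C S : measurable S -> pr (~` S) = 1 - pr S.
Proof.
move=> mS; apply: EFin_inj; rewrite EFinB -!prE //; last exact: measurableC.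
exact: probability_setC.
Qed.

Lemma mle (X : {RV P >-> R}) c : measurable [set w | X w <= c].
Proof.
rewrite (_ : [set w | X w <= c] = X @^-1` `]-oo, c]); first exact: measurable_funPTI.
by apply/seteqP; split => w /=; rewrite in_itv.
Qed.

Lemma mlt (X : {RV P >-> R}) c : measurable [set w | X w < c].
Proof.
rewrite (_ : [set w | X w < c] = X @^-1` `]-oo, c[); first exact: measurable_funPTI.
by apply/seteqP; split => w /=; rewrite in_itv.
Qed.

Lemma mge (X : {RV P >-> R}) c : measurable [set w | c <= X w].
Proof.
rewrite (_ : [set w | c <= X w] = X @^-1` `[c, +oo[); first exact: measurable_funPTI.
by apply/seteqP; split => w /=; rewrite in_itv /= andbT.
Qed.

Lemma mgt (X : {RV P >-> R}) c : measurable [set w | c < X w].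
Proof.
rewrite (_ : [set w | c < X w] = X @^-1` `]c, +oo[); first exact: measurable_funPTI.
by apply/seteqP; split => w /=; rewrite in_itv /= andbT.
Qed.

Lemma cdfE (X : {RV P >-> R}) x : fine (cdf X x) = pr [set w | X w <= x].
Proof.
rewrite /cdf /distribution /pushforward /pr; congr (fine (P _)).
Qed.

Lemma sym_le (X : {RV P >-> R}) g c : symmetric_RV_about P X g ->
  pr [set w | X w <= g - c] = pr [set w | g + c <= X w].
Proof.
move=> hs; have := hs `]-oo, g - c]%classic ltac:(by []).

rewrite /pr => ->; congr (fine (P _)).
apply/seteqP; split => w /=; rewrite in_itv /=; lra.
Qed.

Lemma sym_lt (X : {RV P >-> R}) g c : symmetric_RV_about P X g ->
  pr [set w | X w < g - c] = pr [set w | g + c < X w].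
Proof.
move=> hs; have := hs `]-oo, g - c[%classic ltac:(by []).

rewrite /pr => ->; congr (fine (P _)).
apply/seteqP; split => w /=; rewrite in_itv /=; lra.
Qed.

End Pr.


Theorem mainTheorem8 (d : measure_display) (T : measurableType d)
  (R : realType) (P : probability T R) (X : {RV P >-> R}) (g sigma : R) :
  (X : T -> R) \in Lfun P 2%:E ->
  ('E_P[X] = g%:E)%E ->
  g != 0 ->
  0 < sigma ->
  ('V_P[X] = (sigma ^+ 2)%:E)%E ->
  unimodal_RV X ->
  symmetric_RV_about P X g ->
  let z := `|g| / (Num.sqrt 3 * sigma) in
  ((1 - 2^-1 * (1 + z + z ^+ 2)^-1)%:E <=
     P [set w | Num.sg (X w) = Num.sg g])%E.
Proof.
move=> XL2 EX g0 s0 VX [m [cvx ccv]] hs; cbv zeta.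
set z := `|g| / (Num.sqrt 3 * sigma).
set k := `|g|.
have k0 : 0 < k by rewrite /k normr_gt0.
pose A t := pr P [set w | X w <= g - t].
pose B t := pr P [set w | g + t < X w].
pose G t := pr P [set w | t < `|X w - g|].
have hBA t : pr P [set w | X w < g - t] = B t by exact: sym_lt X g t hs.
have hAA t : A t = pr P [set w | g + t <= X w] by exact: sym_le X g t hs.
have GS t : [set w | t < `|X w - g|] = [set w | X w < g - t] `|` [set w | g + t < X w].
  apply/seteqP; split => w /=.
  + case: (ler0P (X w - g)) => h.
    * by move=> ht; left; clear -h ht; lra.
    * by move=> ht; right; clear -h ht; lra.
  + by case=> h; case: (ler0P (X w - g)) => h'; clear -h h'; lra.
have mG t : d.-measurable [set w | t < `|X w - g|].
  by rewrite GS; exact: (measurableU _ _ (mlt X (g - t)) (mgt X (g + t))).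
have hG t : 0 <= t -> G t = 2 * B t.
  move=> t0; rewrite /G GS.
  rewrite (pr_U _ _ (mlt X (g - t)) (mgt X (g + t))); last first.
    by apply/seteqP; split => w //= [h1 h2]; exfalso; clear -h1 h2 t0; lra.
  rewrite hBA /B; ring.
have mA t := mle X (g - t).
have mB t := mgt X (g + t).
have hA1 t : 0 < t -> 2 * A t <= 1.
  move=> t0.
  have hd : [set w | X w <= g - t] `&` [set w | g + t <= X w] = set0.
    by apply/seteqP; split => w //= [h1 h2]; exfalso; clear -h1 h2 t0; lra.
  have hU := pr_U _ _ (mA t) (mge X (g + t)) hd.
  have h1 := @pr_le1 _ _ _ P _ (measurableU _ _ (mA t) (mge X (g + t))).
  rewrite hU -hAA in h1.
  rewrite /A in h1 *; clear -h1; lra.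
have hB1 t : 0 <= t -> 2 * B t <= 1.
  by move=> t0; rewrite -hG //; apply: pr_le1.
have BB t t' : t <= t' -> B t' <= B t.
  move=> tt'; apply: (pr_le _ _ (mB t') (mB t)).
  by move=> w /= h; clear -h tt'; lra.
have AB t t' : t < t' -> A t' <= B t.
  move=> tt'; rewrite -hBA; apply: (pr_le _ _ (mA t') (mlt X (g - t))).
  by move=> w /= h; clear -h tt'; lra.
have sg_pos (y : R) : (Num.sg y = 1) <-> 0 < y.
  split => [h|h]; last exact: gtr0_sg.
  by rewrite -sgr_gt0 h ltr01.
have sg_neg (y : R) : (Num.sg y = -1) <-> y < 0.
  split => [h|h]; last exact: ltr0_sg.
  by rewrite -sgr_lt0 h oppr_lt0 ltr01.
set C := [set w | Num.sg (X w) = Num.sg g].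
have [w [PC w0 hw]] : exists w : R, [/\ (P C = (1 - w)%:E)%E, 0 <= w &
    (forall t, 0 < t -> t < k -> (w <= A t) /\ (w <= B t))].
  have [glt|ggt|geq] := ltgtP g 0.
  -
    have kE : k = - g by rewrite /k ltr0_norm.
    exists (pr P [set w | 0 <= X w]).
    have CE : C = ~` [set w | 0 <= X w].
      apply/seteqP; split => x /=.
      + by rewrite /C /= (ltr0_sg glt) => /sg_neg h; rewrite leNgt h.
      + by move=> h; rewrite /C /= (ltr0_sg glt); apply/sg_neg; rewrite ltNge; apply/negP.
    split.
    + by rewrite CE (prE _ (measurableC (mge X 0))) (pr_C _ (mge X 0)).
    + exact: pr_ge0.
    move=> t t0 tk; rewrite kE in tk; split.
    + rewrite hAA; apply: (pr_le _ _ (mge X 0) (mge X (g + t))).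
      by move=> x /= h; clear -h t0 tk; lra.
    + apply: (pr_le _ _ (mge X 0) (mB t)).
      by move=> x /= h; clear -h t0 tk; lra.
  -
    have kE : k = g by rewrite /k gtr0_norm.
    exists (pr P [set w | X w <= 0]).
    have CE : C = ~` [set w | X w <= 0].
      apply/seteqP; split => x /=.
      + by rewrite /C /= (gtr0_sg ggt) => /sg_pos h; rewrite leNgt h.
      + by move=> h; rewrite /C /= (gtr0_sg ggt); apply/sg_pos; rewrite ltNge; apply/negP.
    split.
    + by rewrite CE (prE _ (measurableC (mle X 0))) (pr_C _ (mle X 0)).
    + exact: pr_ge0.
    move=> t t0 tk; rewrite kE in tk; split.
    + apply: (pr_le _ _ (mle X 0) (mA t)).
      by move=> x /= h; clear -h t0 tk; lra.
    + rewrite -hBA; apply: (pr_le _ _ (mle X 0) (mlt X (g - t))).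
      by move=> x /= h; clear -h t0 tk; lra.
  - by move: g0; rewrite geq eqxx.
have Mb a b : 0 < a -> 0 < b -> (forall t, 0 <= t -> a - b * t <= G t) ->
    a ^+ 3 / (3 * b ^+ 2) <= sigma ^+ 2.
  by move=> a0 b0 h; exact: (moment X g sigma a b EX VX a0 b0 h).
have z0 : 0 <= z by rewrite /z divr_ge0 // mulr_ge0 // ?sqrtr_ge0 // ltW.
have key : (2 * w) * (1 + z + z ^+ 2) <= 1.
  have [gm|mg] := leP g m.
  - apply: (@core R (fun t => 2 * A t) G k (2 * w) sigma) => //.
    + by clear -w0; lra.
    + move=> x y l /= x0 y0 l0 l1.
      have := cvx (g - x) (g - y) l ltac:(rewrite /=; clear -x0 gm; lra)
        ltac:(rewrite /=; clear -y0 gm; lra) l0 l1.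
      rewrite !cdfE.
      have -> : l * (g - x) + (1 - l) * (g - y) = g - (l * x + (1 - l) * y) by ring.
      rewrite /A => h; clear -h; lra.
    + by move=> t _ /=; have := pr_ge0 (P:=P) [set w | X w <= g - t]; rewrite /A; clear; lra.
    + by move=> t t0 tk /=; have [h _] := hw t t0 tk; clear -h; lra.
    + by move=> t t' t0 tt' /=; rewrite hG //; have := AB t t' tt'; clear; lra.
  - have hBF t : B t = 1 - fine (cdf X (g + t)).
      rewrite cdfE /B -(pr_C _ (mle X (g + t))).
      congr (pr P _); apply/seteqP; split => x /= h.
      + by rewrite leNgt h.
      + by rewrite ltNge; apply/negP.
    apply: (@core R (fun t => 2 * B t) G k (2 * w) sigma) => //.
    + by clear -w0; lra.
    + move=> x y l /= x0 y0 l0 l1.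
      have := ccv (g + x) (g + y) l ltac:(rewrite /=; clear -x0 mg; lra)
        ltac:(rewrite /=; clear -y0 mg; lra) l0 l1.
      rewrite !hBF.
      have -> : l * (g + x) + (1 - l) * (g + y) = g + (l * x + (1 - l) * y) by ring.
      move=> h; clear -h; lra.
    + by move=> t _ /=; have := pr_ge0 (P:=P) [set w | g + t < X w]; rewrite /B; clear; lra.
    + by move=> t t0; apply: hB1; clear -t0; lra.
    + by move=> t t0 tk /=; have [_ h] := hw t t0 tk; clear -h; lra.
    + by move=> t t' t0 tt' /=; rewrite hG //; have := BB t t' (ltW tt'); clear; lra.
rewrite PC lee_fin.
have Q0 : 0 < 1 + z + z ^+ 2 by have := sqr_ge0 z; clear -z0; lra.
suff : w <= 2^-1 * (1 + z + z ^+ 2)^-1 by clear; lra.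
rewrite -invfM -[X in _ <= X]mul1r ler_pdivlMr; last by clear -Q0; lra.
by clear -key; lra.
Qed.
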